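(* Let $N$ be an acyclic CP-net over features $X_1,\dots,X_n$ with finite domains, and let $\mathrm{pen}$ be the penalty function of the weighted soft-constraint approximation of $N$ defined in the context. Then for all outcomes $\alpha,\beta$, if $\alpha \succ_N \beta$ then $\mathrm{pen}(\alpha) < \mathrm{pen}(\beta)$.
   Context: A CP-net $N$ consists of a directed graph on the features, where $Pa(X)$ denotes the set of parents of $X$, together with, for every feature $X$ and every assignment $u$ to $Pa(X)$, a strict total order $\succ_{X,u}$ on $D(X)$. $N$ is acyclic if its graph is acyclic. An outcome is a complete assignment to all features. The relation $\succ_N$ is the transitive closure of improving flips: $\alpha$ is obtained from $\beta$ by an improving flip if $\alpha$ and $\beta$ differ only on one feature $X$ and $\alpha(X) \succ_{X,u} \beta(X)$, where $u$ is the common restriction of $\alpha,\beta$ to $Pa(X)$. Weighted approximation: for a feature $X$, a parent assignment $u$ and $x\in D(X)$, let $p_u(x)\in\{0,\dots,|D(X)|-1\}$ be the number of values of $D(X)$ strictly above $x$ in $\succ_{X,u}$. Weights are defined by processing the features in a reverse topological order of the graph of $N$: $w(X)=1$ if $X$ has no children, and otherwise $w(X)=\sum_{Y:\,X\in Pa(Y)} w(Y)\cdot|D(Y)|$. For an outcome $\alpha$, $\mathrm{pen}(\alpha)=\sum_{X} w(X)\cdot p_{\alpha|_{Pa(X)}}(\alpha(X))$, where $\alpha|_{Pa(X)}$ is the restriction of $\alpha$ to $Pa(X)$. (This is the weighted/min+ soft constraint problem, with one soft constraint on $\{X\}\cup Pa(X)$ for each feature $X$; smaller total penalty means more preferred.)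 *)

(* Defs.v *)
From Stdlib Require Import Relations.
From mathcomp Require Import all_boot.
Set Implicit Arguments. Unset Strict Implicit. Unset Printing Implicit Defensive.

(* The CP-net graph is [par : rel 'I_n] with [par j i] meaning "j is a parent of i"
   (edge j -> i).  The CPT of feature i is [pref i : outcome -> rel (D i)]:
   [pref i a x y] means "x is preferred to y" (x \succ_{i,u} y) under the
   parent assignment u = a|_{Pa(i)}; it must only depend on a through Pa(i). *)

Definition outcome (n : nat) (D : 'I_n -> finType) := forall i : 'I_n, D i.

Definition acyclic (n : nat) (par : rel 'I_n) : Prop :=
  forall (x : 'I_n) (p : seq 'I_n), p != [::] -> path par x p -> last x p != x.

Definition strict_total_order (T : finType) (r : rel T) : Prop :=
  (forall x, ~~ r x x) /\ (forall x y z, r x y -> r y z -> r x z) /\ (forall x y, x != y -> r x y || r y x).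

Definition is_CPnet (n : nat) (D : 'I_n -> finType) (par : rel 'I_n)
    (pref : forall i : 'I_n, outcome D -> rel (D i)) : Prop :=
  (forall i (a b : outcome D), (forall j, par j i -> a j = b j) ->
      forall x y, pref i a x y = pref i b x y) /\
  (forall i (a : outcome D), strict_total_order (pref i a)).

Definition improving_flip (n : nat) (D : 'I_n -> finType)
    (pref : forall i : 'I_n, outcome D -> rel (D i)) (alpha beta : outcome D) : Prop :=
  exists i : 'I_n, (forall j, j != i -> alpha j = beta j) /\ pref i beta (alpha i) (beta i).

Definition cp_succ (n : nat) (D : 'I_n -> finType)
    (pref : forall i : 'I_n, outcome D -> rel (D i)) : relation (outcome D) :=
  clos_trans (outcome D) (improving_flip pref).

Definition rankp (n : nat) (D : 'I_n -> finType)
    (pref : forall i : 'I_n, outcome D -> rel (D i)) (i : 'I_n) (a : outcome D) : nat :=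
  #|[pred y : D i | pref i a y (a i)]|.

Definition weight_step (n : nat) (D : 'I_n -> finType) (par : rel 'I_n)
    (w : 'I_n -> nat) (x : 'I_n) : nat :=
  if [exists y, par x y] then \sum_(y | par x y) w y * #|D y| else 1.

(* For an acyclic graph on n nodes, every path has fewer than n edges, so
   n iterations reach the (unique) solution of the recursion, i.e. the
   weights computed in reverse topological order. *)
Definition weight (n : nat) (D : 'I_n -> finType) (par : rel 'I_n) : 'I_n -> nat :=
  iter n (weight_step D par) (fun _ => 1).

Definition pen (n : nat) (D : 'I_n -> finType) (par : rel 'I_n)
    (pref : forall i : 'I_n, outcome D -> rel (D i)) (a : outcome D) : nat :=
  \sum_(i < n) weight D par i * rankp pref i a.

(* Main.v *)
Require Import Defs.
From Stdlib Require Import Relations.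
From mathcomp Require Import all_boot.

Module Helpers.
Set Implicit Arguments. Unset Strict Implicit.

Lemma acyc_uniq n (par : rel 'I_n) : acyclic par ->
  forall p x, path par x p -> uniq (x :: p).
Proof.
move=> Hac; elim=> [|y p IH] x //= /andP [Hxy Hp].
have := IH y Hp => /= ->; rewrite andbT.
apply/negP => Hx.
have Hx' : x \in y :: p by [].
have Hpp : path par x (y :: p) by rewrite /= Hxy.
case/splitPr: Hx' Hpp => p1 p2.
rewrite cat_path => /andP [H1 H2].
have Hc : path par x (rcons p1 x).
  rewrite rcons_path H1 /=. by case: (last x p1) H2 => ? ? /= /andP [->].
have := Hac x (rcons p1 x).
have Hne : rcons p1 x != [::] by case: (p1).
by rewrite Hc last_rcons eqxx => /(_ Hne isT).
Qed.

Lemma path_size n (par : rel 'I_n) : acyclic par ->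
  forall p x, path par x p -> size p < n.
Proof.
move=> Hac p x /(acyc_uniq Hac) /card_uniqP /= Hs.
have := max_card (mem (x :: p)); rewrite card_ord Hs //.
Qed.

Lemma step_congr n (D : 'I_n -> finType) (par : rel 'I_n) (w1 w2 : 'I_n -> nat) x :
  (forall y, par x y -> w1 y = w2 y) -> weight_step D par w1 x = weight_step D par w2 x.
Proof.
move=> H; rewrite /weight_step; case: ifP => // _.
by apply: eq_bigr => y Hy; rewrite H.
Qed.

Lemma iter_stab n (D : 'I_n -> finType) (par : rel 'I_n) m :
  forall x, (forall p, path par x p -> size p < m) ->
  forall k, m <= k -> iter k (weight_step D par) (fun _ => 1) x =
                     iter m (weight_step D par) (fun _ => 1) x.
Proof.
elim: m => [|m IH] x Hx.
  by have := Hx [::] isT.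
case=> // k Hk; rewrite !iterS; apply: step_congr => y Hy.
apply: IH => // p Hp.
by have := Hx (y :: p); rewrite /= Hy Hp => /(_ isT).
Qed.

Lemma weight_fix n (D : 'I_n -> finType) (par : rel 'I_n) :
  acyclic par -> forall x, weight D par x = weight_step D par (weight D par) x.
Proof.
move=> Hac x; rewrite /weight -iterS.
symmetry; apply: iter_stab => // p; exact: path_size.
Qed.

Lemma weight_pos n (D : 'I_n -> finType) (par : rel 'I_n) :
  (forall y, 0 < #|D y|) -> forall x, 0 < weight D par x.
Proof.
move=> HD x; rewrite /weight.
suff H : forall k x, 0 < iter k (weight_step D par) (fun _ => 1) x by [].
elim=> [|k IH] // {}x.
rewrite iterS /weight_step; case: existsP => // [[y Hy]].
rewrite (bigD1 y Hy) /=; apply: leq_trans (leq_addr _ _).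
by rewrite muln_gt0 IH HD.
Qed.
End Helpers.
Import Helpers.


Section S.
Variables (n : nat) (D : 'I_n -> finType) (par : rel 'I_n)
    (pref : forall i : 'I_n, outcome D -> rel (D i)).
Hypothesis Hac : acyclic par.
Hypothesis Hcp : @is_CPnet n D par pref.

Lemma par_irr x : ~~ par x x.
Proof.
apply/negP => H; have := Hac x [:: x] isT; by rewrite /= H /= eqxx => /(_ isT).
Qed.

Lemma rank_lt i a : @rankp n D pref i a < #|D i|.
Proof.
rewrite /rankp -(cardC [pred y | pref i a y (a i)]) -addn1 leq_add2l.
apply/card_gt0P; exists (a i); rewrite !inE /=.
by case: (Hcp) => _ /(_ i a) [->].
Qed.

Lemma step_lt alpha beta : improving_flip pref alpha beta ->
  @pen n D par pref alpha < @pen n D par pref beta.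
Proof.
case=> X [Heq Hpr].
have HD : forall y, 0 < #|D y|.
  by move=> y; apply/card_gt0P; exists (alpha y).
set w := weight D par.
have Hw := weight_pos par HD.
have prefE : forall i, (forall j, par j i -> j != X) ->
    pref i alpha =2 pref i beta.
  move=> i Hi x y; case: Hcp => H _; apply: H => j Hj; exact: Heq (Hi j Hj).
have HrX : rankp pref X alpha < rankp pref X beta.
  apply: proper_card; apply/properP; split.
    apply/subsetP => y; rewrite !inE /= prefE; last first.
      move=> j Hj; apply/eqP => E; move: Hj; rewrite E; apply/negP; exact: par_irr.
    move=> Hy; case: (Hcp) => _ /(_ X beta) [_ [Ht _]]; exact: Ht Hy Hpr.
  exists (alpha X); rewrite !inE //=.
  by case: (Hcp) => _ /(_ X alpha) [->].
have Hri : forall i, i != X -> ~~ par X i -> rankp pref i alpha = rankp pref i beta.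
  move=> i HiX Hpi; rewrite /rankp (Heq i HiX); apply: eq_card => y; rewrite !inE /=.
  rewrite prefE // => j Hj; apply/eqP => E; by move: Hpi; rewrite -E Hj.
have Hch : \sum_(i | par X i) w i * rankp pref i alpha < w X.
  rewrite {2}/w (weight_fix D Hac) /weight_step; case: existsP => [[y0 Hy]|Hno].
    rewrite (bigD1 y0 Hy) [X in _ < X](bigD1 y0 Hy) /= -addSn.
    apply: leq_add; first by rewrite ltn_pmul2l ?Hw ?rank_lt.
    by apply: leq_sum => k _; rewrite leq_mul2l ltnW ?rank_lt ?orbT.
  rewrite big1 // => k Hk; by case: Hno; exists k.
rewrite /pen (bigD1 X) //= [X in _ < X](bigD1 X) //=.
have Hrest : \sum_(i < n | i != X) w i * rankp pref i alpha <=
   \sum_(i < n | i != X) w i * rankp pref i beta + \sum_(i | par X i) w i * rankp pref i alpha.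
  apply: leq_trans (_ : \sum_(i < n | i != X) (w i * rankp pref i beta +
           (if par X i then w i * rankp pref i alpha else 0)) <= _).
    apply: leq_sum => i HiX; case: ifP => Hp; first by rewrite leq_addl.
    by rewrite addn0 Hri ?Hp.
  rewrite big_split /= leq_add2l [X in _ <= X]big_mkcond /= [X in _ <= X](bigD1 X) //=.
  exact: leq_addl.
apply: leq_trans (_ : w X * rankp pref X alpha + w X +
    \sum_(i < n | i != X) w i * rankp pref i beta <= _).
  rewrite -addnA -addnS leq_add2l; apply: (leq_ltn_trans Hrest); by rewrite addnC ltn_add2r.
by rewrite leq_add2r -mulnSr leq_mul2l HrX orbT.
Qed.
End S.

Theorem theorem3 (n : nat) (D : 'I_n -> finType) (par : rel 'I_n)
    (pref : forall i : 'I_n, outcome D -> rel (D i)) :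
  @acyclic n par -> @is_CPnet n D par pref ->
  forall alpha beta : outcome D,
    @cp_succ n D pref alpha beta -> @pen n D par pref alpha < @pen n D par pref beta.
Proof.
move=> Hac Hcp alpha beta; elim=> [a b Hab|a b c _ H1 _ H2].
  exact: step_lt.
exact: ltn_trans H1 H2.
Qed.
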